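(* Let $p$ be an odd prime, $n=2k$, and $\mathcal{S}=\{y\in\mathbb{F}_{p^n}: T^n_k(y)=0\}$. Let $L(x)=\sum_{j=0}^{n-1}c_jx^{p^j}$ with all $c_j\in\mathbb{F}_{p^k}$ be a linearized polynomial that permutes $\mathbb{F}_{p^n}$, let $\delta\in\mathbb{F}_{p^n}$ be arbitrary, let $t$ be a nonnegative integer and $s=t(p^k+1)$. Then the mapping $$G(x)=-L(x)+(x+\delta)^s-(x+\delta)^{p^ks}$$ permutes $\mathcal{S}$, and consequently $$F(x)=L(x)+(x^{p^k}-x+\delta)^{t(p^k+1)}$$ is a permutation of $\mathbb{F}_{p^n}$.
   Context: $T^n_k(\beta)=\beta+\beta^{p^k}$ for $n=2k$ is the relative trace from $\mathbb{F}_{p^n}$ to $\mathbb{F}_{p^k}$. The convention $y^0=1$ is used. *)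

(* Defs.v *)
From HB Require Import structures.
From mathcomp Require Import all_boot all_order all_algebra all_field.
Set Implicit Arguments. Unset Strict Implicit. Unset Printing Implicit Defensive.
Import GRing.Theory.
Local Open Scope ring_scope.

(* Relative trace T^n_k(b) = b + b^(p^k) from F_{p^n} to F_{p^k}, n = 2k. *)
Definition reltrace (F : finFieldType) (p k : nat) (b : F) : F := b + b ^+ (p ^ k).

Definition Sset (F : finFieldType) (p k : nat) : {set F} :=
  [set y : F | reltrace p k y == 0].

Definition in_subfield (F : finFieldType) (p k : nat) (c : F) : Prop :=
  c ^+ (p ^ k) = c.

Definition linpoly (F : finFieldType) (p n : nat) (c : nat -> F) (x : F) : F :=
  \sum_(j < n) c j * x ^+ (p ^ j).

(* Main.v *)
Require Import Defs.
From HB Require Import structures.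
From mathcomp Require Import all_boot all_order all_algebra all_field.
From mathcomp Require Import ring.
Import GRing.Theory.
Local Open Scope ring_scope.

Theorem proposition7 (F : finFieldType) (p k : nat)
  (hp : prime p) (hodd : odd p) (hchar : p \in [pchar F])
  (hcard : #|F| = (p ^ (2 * k))%N)
  (c : nat -> F) (hc : forall j : nat, (j < 2 * k)%N -> in_subfield p k (c j))
  (hL : bijective (linpoly p (2 * k) c))
  (delta : F) (t : nat) :
  let s := (t * (p ^ k + 1))%N in
  let L := linpoly p (2 * k) c in
  let G := fun x : F => - L x + (x + delta) ^+ s - (x + delta) ^+ (p ^ k * s) in
  let Fm := fun x : F => L x + (x ^+ (p ^ k) - x + delta) ^+ (t * (p ^ k + 1)) in
  [/\ {in @Sset F p k, forall y, G y \in @Sset F p k},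
      {in @Sset F p k &, injective G} &
      bijective Fm].
Proof.
move=> s L G Fm.
have pn (j : nat) : [pchar F].-nat (p ^ j)%N by rewrite pnatX pnatE // hchar.
have frD j (a b : F) : (a + b) ^+ (p ^ j) = a ^+ (p ^ j) + b ^+ (p ^ j).
  exact: exprDn_pchar (pn j).
have frN j (a : F) : (- a) ^+ (p ^ j) = - a ^+ (p ^ j) by exact: exprNn_pchar (pn j).
have frB j (a b : F) : (a - b) ^+ (p ^ j) = a ^+ (p ^ j) - b ^+ (p ^ j).
  by rewrite frD frN.
have qq (x : F) : x ^+ (p ^ k * p ^ k) = x.
  by rewrite -expnD addnn -mul2n -hcard expf_card.
have qgt0 : (0 < p ^ k)%N by rewrite expn_gt0 prime_gt0.
have LD a b : L (a + b) = L a + L b.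
  rewrite /L /linpoly -big_split; apply: eq_bigr => j _.
  by rewrite frD mulrDr.
have LN a : L (- a) = - L a.
  rewrite /L /linpoly -sumrN; apply: eq_bigr => j _.
  by rewrite frN mulrN.
have LB a b : L (a - b) = L a - L b by rewrite LD LN.
have L0 : L 0 = 0 by have := LB 0 0; rewrite subrr => ->; rewrite subrr.
have Lq x : L (x ^+ (p ^ k)) = L x ^+ (p ^ k).
  rewrite /L /linpoly.
  rewrite (@big_morph _ _ (fun y : F => y ^+ (p ^ k)) 0 +%R 0 +%R (frD k)); last first.
    by rewrite expr0n eqn0Ngt qgt0.
  apply: eq_bigr => j _.
  rewrite exprMn (hc j (ltn_ord j)) -!exprM; congr (_ * _).
  by rewrite mulnC.
have sq (z : F) : z ^+ (p ^ k * s) = z ^+ s.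
  have e1 : (p ^ k * s = (p ^ k * p ^ k) * t + p ^ k * t)%N by rewrite /s; ring.
  have e2 : (s = p ^ k * t + t)%N by rewrite /s; ring.
  by rewrite e1 e2 exprD (mulnC _ t) exprM qq exprD mulrC.
have GL y : G y = - L y by rewrite /G sq addrK.
have Linj : injective L by exact: bij_inj hL.
split.
- move=> y; rewrite !inE /reltrace GL => /eqP H.
  by rewrite frN -Lq -opprD -LD H L0 oppr0.
- by move=> y1 y2 _ _; rewrite !GL => /oppr_inj /Linj.
apply: injF_bij => x y.
have hq z : ((z ^+ (p ^ k) - z + delta) ^+ s) ^+ (p ^ k) = (z ^+ (p ^ k) - z + delta) ^+ s.
  by rewrite -exprM mulnC sq.
have psi z : Fm z ^+ (p ^ k) - Fm z = L (z ^+ (p ^ k) - z).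
  rewrite /Fm -/s frD hq -Lq LB.
  by rewrite opprD addrACA subrr addr0.
move=> H.
have H1 : x ^+ (p ^ k) - x = y ^+ (p ^ k) - y by apply: Linj; rewrite -(psi x) -(psi y) H.
apply: Linj; apply: (addIr ((y ^+ (p ^ k) - y + delta) ^+ s)).
by rewrite -{1}H1; exact: H.
Qed.
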